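(* Let $0\le k\le n$. There are exactly $k(n-k)+1$ isomorphism classes of matroids of rank $k$ on $n$ elements of the form $\mathsf{U}_{0,m}\oplus\mathsf{U}_{k-\ell,n-\ell-m}\oplus\mathsf{U}_{\ell,\ell}$, and the Tutte polynomials of representatives of these classes are linearly independent in $\mathbb{Z}[x,y]$.
   Context: $\mathsf{U}_{r,m}$ is the uniform matroid of rank $r$ on $m$ elements. *)

(* Defs.v *)
From HB Require Import structures.
From mathcomp Require Import all_boot all_order all_algebra.
Set Implicit Arguments. Unset Strict Implicit. Unset Printing Implicit Defensive.
Import Order.TTheory GRing.Theory Num.Theory.

Definition is_matroid (T : finType) (B : {set {set T}}) : bool :=
  (B != set0) &&
  [forall B1 in B, forall B2 in B, forall x in B1 :\: B2,
     exists y in B2 :\: B1, (y |: (B1 :\ x)) \in B].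

Definition mrank (T : finType) (B : {set {set T}}) (A : {set T}) : nat :=
  \max_(X in B) #|A :&: X|.

Definition unif (r m : nat) : {set {set 'I_m}} := [set X : {set 'I_m} | #|X| == r].

Definition dsum (T1 T2 : finType) (B1 : {set {set T1}}) (B2 : {set {set T2}})
  : {set {set (T1 + T2)%type}} :=
  [set ((@inl T1 T2 @: X1) :|: (@inr T1 T2 @: X2)) | X1 : {set T1} in B1, X2 : {set T2} in B2].

(* matroid isomorphism: a bijection of ground sets carrying bases to bases
   (bijective = injective between ground sets of equal size) *)
Definition miso (T1 T2 : finType) (B1 : {set {set T1}}) (B2 : {set {set T2}}) : bool :=
  (#|T1| == #|T2|) &&
  [exists f : {ffun T1 -> T2},
     injectiveb f && [forall X : {set T1}, (X \in B1) == ((f @: X) \in B2)]].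

Definition form_matroid (n k m l : nat) :=
  dsum (dsum (unif 0 m) (unif (k - l) (n - l - m))) (unif l l).

Definition form_ok (n k m l : nat) : bool :=
  [&& l <= k, m + l <= n & k - l <= n - l - m].

Definition form_set (n k : nat) : {set {set {set 'I_n}}} :=
  [set B : {set {set 'I_n}} | is_matroid B &&
     [exists m : 'I_n.+1, exists l : 'I_n.+1,
        form_ok n k m l && miso B (form_matroid n k m l)]].

Definition form_classes (n k : nat) : {set {set {set {set 'I_n}}}} :=
  [set [set B' in form_set n k | miso B B'] | B in form_set n k].

(* Tutte polynomial in Z[x,y] = {poly {poly int}}, x = 'X (outer), y = 'X%:P *)
Definition tutte (T : finType) (B : {set {set T}}) : {poly {poly int}} :=
  (\sum_(A : {set T})
    (('X : {poly {poly int}}) - 1) ^+ (mrank B setT - mrank B A) *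
    (('X%:P : {poly {poly int}}) - 1) ^+ (#|A| - mrank B A))%R.

(* Main.v *)
Require Import Defs.
From HB Require Import structures.
From mathcomp Require Import all_boot all_order all_algebra.
From mathcomp Require Import zify.
Import GRing.Theory.

Module Part1.
Set Implicit Arguments. Unset Strict Implicit. Unset Printing Implicit Defensive.
Import GRing.Theory.

Section SumSets.
Variables T1 T2 : finType.

Definition pl (S : {set (T1 + T2)%type}) : {set T1} := inl @^-1: S.
Definition pr (S : {set (T1 + T2)%type}) : {set T2} := inr @^-1: S.
Definition jn (X1 : {set T1}) (X2 : {set T2}) : {set (T1 + T2)%type} :=
  (@inl T1 T2 @: X1) :|: (@inr T1 T2 @: X2).

Lemma inl_inj : injective (@inl T1 T2). Proof. by move=> a b []. Qed.
Lemma inr_inj : injective (@inr T1 T2). Proof. by move=> a b []. Qed.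

Lemma inl_inr a (C : {set T2}) : (@inl T1 T2 a \in inr @: C) = false.
Proof. by apply/negP=> /imsetP [c _]. Qed.
Lemma inr_inl b (C : {set T1}) : (@inr T1 T2 b \in inl @: C) = false.
Proof. by apply/negP=> /imsetP [c _]. Qed.
Lemma inl_jn a X1 X2 : (inl a \in jn X1 X2) = (a \in X1).
Proof. by rewrite inE (mem_imset _ _ inl_inj) inl_inr orbF. Qed.
Lemma inr_jn b X1 X2 : (inr b \in jn X1 X2) = (b \in X2).
Proof. by rewrite inE (mem_imset _ _ inr_inj) inr_inl. Qed.

Lemma pl_jn X1 X2 : pl (jn X1 X2) = X1.
Proof. by apply/setP=> a; rewrite inE inl_jn. Qed.

Lemma pr_jn X1 X2 : pr (jn X1 X2) = X2.
Proof. by apply/setP=> a; rewrite inE inr_jn. Qed.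

Lemma jn_split (S : {set (T1 + T2)%type}) : jn (pl S) (pr S) = S.
Proof. by apply/setP=> [[a|b]]; rewrite ?inl_jn ?inr_jn inE. Qed.

Lemma card_jn X1 X2 : #|jn X1 X2| = #|X1| + #|X2|.
Proof.
rewrite cardsU !card_imset; try solve [exact: inl_inj | exact: inr_inj].
suff -> : (@inl T1 T2 @: X1) :&: (inr @: X2) = set0 by rewrite cards0 subn0.
apply/setP=> x; rewrite !inE; apply/negP=> /andP [/imsetP [a _ ->] /imsetP [b _]].
by [].
Qed.

Lemma card_split (S : {set (T1 + T2)%type}) : #|S| = #|pl S| + #|pr S|.
Proof. by rewrite -{1}(jn_split S) card_jn. Qed.

Lemma setI_jn (A : {set (T1 + T2)%type}) X1 X2 : A :&: jn X1 X2 = jn (pl A :&: X1) (pr A :&: X2).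
Proof.
apply/setP=> [[a|b]]; rewrite in_setI ?inl_jn ?inr_jn in_setI !inE //.
Qed.

Lemma mem_dsum (B1 : {set {set T1}}) (B2 : {set {set T2}}) (S : {set (T1 + T2)%type}) :
  (S \in dsum B1 B2) = (pl S \in B1) && (pr S \in B2).
Proof.
apply/imset2P/andP.
  by case=> X1 X2 h1 h2 ->; rewrite -/(jn X1 X2) pl_jn pr_jn.
by case=> h1 h2; exists (pl S) (pr S) => //; rewrite -/(jn _ _) jn_split.
Qed.

End SumSets.

End Part1.
Import Part1.

Module Part2.
Set Implicit Arguments. Unset Strict Implicit. Unset Printing Implicit Defensive.
Import GRing.Theory.

Lemma imset_can (T1 T2 : finType) (f : T1 -> T2) (g : T2 -> T1) (Y : {set T2}) :
  cancel g f -> f @: (g @: Y) = Y.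
Proof. by move=> gf; rewrite -imset_comp (eq_imset _ gf) imset_id. Qed.

Lemma imset_setT_can (T1 T2 : finType) (f : T1 -> T2) (g : T2 -> T1) :
  cancel g f -> f @: [set: T1] = [set: T2].
Proof.
by move=> gf; apply/setP=> y; rewrite inE; apply/imsetP; exists (g y); rewrite ?inE ?gf.
Qed.

Lemma miso_intro (T1 T2 : finType) (B1 : {set {set T1}}) (B2 : {set {set T2}})
  (f : T1 -> T2) : #|T1| = #|T2| -> injective f ->
  (forall X, (X \in B1) = (f @: X \in B2)) -> miso B1 B2.
Proof.
move=> hc finj hX; apply/andP; split; first by apply/eqP.
apply/existsP; exists [ffun x => f x]; apply/andP; split.
  by apply/injectiveP=> x y; rewrite !ffunE; exact: finj.
apply/forallP=> X; rewrite hX.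
have -> : [ffun x => f x] @: X = f @: X by apply: eq_imset => x; rewrite ffunE.
by [].
Qed.

Lemma miso_elim (T1 T2 : finType) (B1 : {set {set T1}}) (B2 : {set {set T2}}) :
  miso B1 B2 -> exists (f : T1 -> T2) (g : T2 -> T1),
    [/\ #|T1| = #|T2|, cancel f g, cancel g f & forall X, (X \in B1) = (f @: X \in B2)].
Proof.
case/andP=> /eqP hc /existsP [f /andP [/injectiveP finj /forallP hX]].
have [g fg gf] := inj_card_bij finj (eq_leq (esym hc)).
by exists f, g; split => // X; apply/eqP; exact: hX.
Qed.

Lemma miso_refl (T : finType) (B : {set {set T}}) : miso B B.
Proof. by apply: (@miso_intro _ _ _ _ id) => // X; rewrite imset_id. Qed.

Lemma miso_sym (T1 T2 : finType) (B1 : {set {set T1}}) (B2 : {set {set T2}}) :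
  miso B1 B2 -> miso B2 B1.
Proof.
case/miso_elim=> f [g [hc fg gf hX]].
apply: (@miso_intro _ _ _ _ g) => //; first exact: (can_inj gf).
by move=> Y; rewrite hX imset_can.
Qed.

Lemma miso_trans (T1 T2 T3 : finType) (B1 : {set {set T1}}) (B2 : {set {set T2}})
  (B3 : {set {set T3}}) : miso B1 B2 -> miso B2 B3 -> miso B1 B3.
Proof.
case/miso_elim=> f [g [hc fg gf hX]]; case/miso_elim=> f' [g' [hc' fg' gf' hX']].
apply: (@miso_intro _ _ _ _ (f' \o f)); first by rewrite hc.
  exact: inj_comp (can_inj fg') (can_inj fg).
by move=> X; rewrite hX hX' imset_comp.
Qed.

Lemma mrank_miso (T1 T2 : finType) (B1 : {set {set T1}}) (B2 : {set {set T2}})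
  (f : T1 -> T2) (g : T2 -> T1) : cancel f g -> cancel g f ->
  (forall X, (X \in B1) = (f @: X \in B2)) ->
  forall A : {set T1}, mrank B2 (f @: A) = mrank B1 A.
Proof.
move=> fg gf hX A; rewrite /mrank (reindex (fun X : {set T1} => f @: X)) /=.
  apply: eq_big => X; first by rewrite hX.
  have finj := can_inj fg; move=> _; rewrite -imsetI; [by rewrite card_imset | by move=> x y _ _; apply: finj].
apply: onW_bij; exists (fun Y : {set T2} => g @: Y) => Y; exact: imset_can.
Qed.

Lemma tutte_miso (T1 T2 : finType) (B1 : {set {set T1}}) (B2 : {set {set T2}}) :
  miso B1 B2 -> tutte B1 = tutte B2.
Proof.
case/miso_elim=> f [g [hc fg gf hX]].
rewrite /tutte (reindex (fun A : {set T1} => f @: A)) /=; last first.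
  apply: onW_bij; exists (fun Y : {set T2} => g @: Y) => Y; exact: imset_can.
apply: eq_bigr => A _.
by rewrite -(imset_setT_can gf) !(mrank_miso fg gf hX) card_imset //; exact: can_inj fg.
Qed.

End Part2.
Import Part2.

Module Part3.
Set Implicit Arguments. Unset Strict Implicit. Unset Printing Implicit Defensive.
Import GRing.Theory.

Lemma mrank_le_card (T : finType) (B : {set {set T}}) A : mrank B A <= #|A|.
Proof. by apply/bigmax_leqP=> X _; apply: subset_leq_card; exact: subsetIl. Qed.

Lemma mrank_le_T (T : finType) (B : {set {set T}}) A : mrank B A <= mrank B setT.
Proof.
apply/bigmax_leqP=> X hX; apply: leq_trans (leq_bigmax_cond _ hX).
by apply: subset_leq_card; apply: setSI; exact: subsetT.
Qed.

Lemma mrank_dsum (T1 T2 : finType) (B1 : {set {set T1}}) (B2 : {set {set T2}}) A :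
  B1 != set0 -> B2 != set0 ->
  mrank (dsum B1 B2) A = mrank B1 (pl A) + mrank B2 (pr A).
Proof.
move=> n1 n2; apply/eqP; rewrite eqn_leq; apply/andP; split.
  apply/bigmax_leqP=> X; rewrite mem_dsum => /andP [h1 h2].
  rewrite -[X in A :&: X](jn_split X) setI_jn card_jn.
  by apply: leq_add; apply: leq_bigmax_cond.
have c1 : 0 < #|B1| by rewrite card_gt0.
have c2 : 0 < #|B2| by rewrite card_gt0.
have [X1 h1 e1] := @eq_bigmax_cond _ (mem B1) (fun X => #|pl A :&: X|) c1.
have [X2 h2 e2] := @eq_bigmax_cond _ (mem B2) (fun X => #|pr A :&: X|) c2.
rewrite /mrank e1 e2.
have hj : jn X1 X2 \in dsum B1 B2 by rewrite mem_dsum pl_jn pr_jn h1 h2.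
apply: leq_trans (leq_bigmax_cond _ hj).
by rewrite setI_jn card_jn ?pl_jn ?pr_jn.
Qed.

Lemma mrank_unif r m (A : {set 'I_m}) : r <= m -> mrank (unif r m) A = minn #|A| r.
Proof.
move=> rm; apply/eqP; rewrite eqn_leq; apply/andP; split.
  apply/bigmax_leqP=> X; rewrite inE => /eqP hX; rewrite leq_min.
  by rewrite !subset_leq_card ?subsetIl // -hX subset_leq_card ?subsetIr.
case: (leqP r #|A|) => hA.
  have /card_geqP [s [us ss sA]] := hA.
  have hX : [set x in s] \in unif r m by rewrite inE cardsE (card_uniqP us) ss.
  apply: leq_trans (leq_bigmax_cond _ hX).
  have sub : [set x in s] \subset A by apply/subsetP=> x; rewrite inE => /sA.
  by rewrite (setIidPr sub) cardsE (card_uniqP us) ss.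
have hC : r - #|A| <= #|~: A|.
  have := cardsC A; rewrite card_ord; lia.
have /card_geqP [s [us ss sA]] := hC.
have hd : A :&: [set x in s] = set0.
  apply/setP=> x; rewrite !inE; apply/negP=> /andP [xa /sA]; by rewrite inE xa.
have hX : A :|: [set x in s] \in unif r m.
  by rewrite inE cardsU hd cards0 cardsE (card_uniqP us) ss; apply/eqP; lia.
apply: leq_trans (leq_bigmax_cond _ hX).
by rewrite setIC setUK.
Qed.

Local Open Scope ring_scope.
Lemma sum_card (T : finType) (V : nmodType) (F : nat -> V) :
  \sum_(A : {set T}) F #|A| = \sum_(a < #|T|.+1) F a *+ 'C(#|T|, a).
Proof.
rewrite (partition_big (fun A : {set T} => (inord #|A| : 'I_#|T|.+1)) predT) //=.
apply: eq_bigr => a _.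
rewrite -card_draws -sumr_const.
apply: eq_big => A; last by move=> /eqP <-; rewrite inordK // ltnS max_card.
by rewrite inE -val_eqE /= inordK // ltnS max_card.
Qed.

Notation xx := ('X : {poly {poly int}}).
Notation yy := (('X)%:P : {poly {poly int}}).
Definition RR (r s : nat) : {poly {poly int}} :=
  \sum_(a < s.+1) ((xx - 1) ^+ (r - minn a r) * (yy - 1) ^+ (a - minn a r)) *+ 'C(s, a).

Lemma tutte_unif r m : (r <= m)%N -> tutte (unif r m) = RR r m.
Proof.
move=> rm; rewrite /tutte mrank_unif // cardsT card_ord (minn_idPr rm).
under eq_bigr => A _ do rewrite mrank_unif //.
rewrite (@sum_card _ _ (fun a => (xx - 1) ^+ (r - minn a r) * (yy - 1) ^+ (a - minn a r))).
by rewrite card_ord.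
Qed.

Lemma tutte_dsum (T1 T2 : finType) (B1 : {set {set T1}}) (B2 : {set {set T2}}) :
  B1 != set0 -> B2 != set0 -> tutte (dsum B1 B2) = tutte B1 * tutte B2.
Proof.
move=> n1 n2; rewrite /tutte big_distrlr /= pair_bigA /=.
rewrite (reindex (fun p : {set T1} * {set T2} => jn p.1 p.2)) /=; last first.
  apply: onW_bij; exists (fun S => (pl S, pr S)) => [[X1 X2]|S] /=.
    by rewrite pl_jn pr_jn.
  exact: jn_split.
apply: eq_bigr => [[A1 A2]] _ /=.
rewrite !mrank_dsum // !pl_jn !pr_jn card_jn /pl /pr !preimsetT.
have h1 := mrank_le_T B1 A1; have h2 := mrank_le_T B2 A2.
have h3 := mrank_le_card B1 A1; have h4 := mrank_le_card B2 A2.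
set a1 := mrank B1 A1 in h1 h3 *; set a2 := mrank B2 A2 in h2 h4 *.
set R1 := mrank B1 setT in h1 *; set R2 := mrank B2 setT in h2 *.
have -> : (R1 + R2 - (a1 + a2) = (R1 - a1) + (R2 - a2))%N by lia.
have -> : (#|A1| + #|A2| - (a1 + a2) = (#|A1| - a1) + (#|A2| - a2))%N by lia.
by rewrite !exprD mulrACA.
Qed.

End Part3.
Import Part3.

Module Part4.
Set Implicit Arguments. Unset Strict Implicit. Unset Printing Implicit Defensive.
Import GRing.Theory Num.Theory.
Local Open Scope ring_scope.

Definition cf (p : {poly {poly int}}) (a b : nat) : int := (p`_a)`_b.

Lemma cfD p q a b : cf (p + q) a b = cf p a b + cf q a b.
Proof. by rewrite /cf !coefD. Qed.
Lemma cfMz p c a b : cf (p *~ c) a b = cf p a b *~ c.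
Proof. by rewrite /cf !coefMrz. Qed.
Lemma cf_sum (I : finType) (F : I -> {poly {poly int}}) a b :
  cf (\sum_i F i) a b = \sum_i cf (F i) a b.
Proof. by rewrite /cf !coef_sum. Qed.

Lemma yyX m : yy ^+ m = ('X ^+ m)%:P.
Proof. by rewrite polyC_exp. Qed.

Lemma cf_shift m l q a b :
  cf (yy ^+ m * q * xx ^+ l) a b =
  if (a < l)%N then 0 else if (b < m)%N then 0 else cf q (a - l) (b - m).
Proof.
rewrite /cf coefMXn; case: (a < l)%N; first by rewrite coef0.
by rewrite yyX coefCM coefXnM.
Qed.

Lemma RR0 s : RR 0 s = yy ^+ s.
Proof.
have -> : yy = 1 + (yy - 1) by rewrite addrC subrK.
rewrite exprDn /RR; apply: eq_bigr => a _.
by rewrite minn0 !subn0 expr0 mul1r expr1n mul1r.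
Qed.

Lemma RRdiag r : RR r r = xx ^+ r.
Proof.
have -> : xx = (xx - 1) + 1 by rewrite subrK.
rewrite exprDn /RR.
apply: eq_bigr => a _.
have ha : (a <= r)%N by rewrite -ltnS.
by rewrite (minn_idPl ha) subnn expr0 mulr1 expr1n mulr1.
Qed.

Definition fR r (a : nat) : {poly {poly int}} :=
  (xx - 1) ^+ (r - minn a r) * (yy - 1) ^+ (a - minn a r).
Lemma RR_nat r s : RR r s = \sum_(0 <= a < s.+1) fR r a *+ 'C(s, a).
Proof. by rewrite big_mkord. Qed.

Lemma RR_pascal r s : RR r.+1 s.+1 = RR r.+1 s + RR r s.
Proof.
have e1 : \sum_(0 <= i < s.+1) fR r.+1 i.+1 *+ 'C(s, i.+1) =
    \sum_(0 <= i < s) fR r.+1 i.+1 *+ 'C(s, i.+1).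
  by rewrite big_nat_recr //= bin_small // mulr0n addr0.
have e2 : \sum_(0 <= i < s.+1) fR r.+1 i.+1 *+ 'C(s, i) =
    \sum_(0 <= i < s.+1) fR r i *+ 'C(s, i).
  by apply: eq_bigr => i _; rewrite /fR minnSS !subSS.
rewrite !RR_nat big_nat_recl // [in RHS]big_nat_recl //.
under eq_bigr => b _ do rewrite binS mulrnDr.
by rewrite big_split /= e1 e2 !bin0 !addrA.
Qed.

Lemma cf_yy s a b : cf (yy ^+ s) a b = ((a == 0%N) && (b == s))%:R.
Proof.
rewrite /cf yyX coefC; case: (a == 0%N) => /=; last by rewrite coef0.
by rewrite coefXn.
Qed.

Lemma cf_xx r a b : cf (xx ^+ r) a b = ((a == r) && (b == 0%N))%:R.
Proof.
rewrite /cf coefXn; case: (a == r) => /=; first by rewrite coef1.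
by rewrite coef0.
Qed.

Lemma cf00 s r : (0 < s)%N -> (r <= s)%N -> cf (RR r s) 0 0 = 0.
Proof.
elim: s r => [|s IH] r // _ rs.
case: r rs => [|r] rs; first by rewrite RR0 cf_yy.
case: (ltngtP r s) => h.
- by rewrite RR_pascal cfD !IH //; lia.
- lia.
- by rewrite h RRdiag cf_xx.
Qed.

Lemma cf10 s r : (r <= s)%N -> 0 <= cf (RR r s) 1 0 /\ ((0 < r < s)%N -> 0 < cf (RR r s) 1 0).
Proof.
elim: s r => [|s IH] r rs.
  have -> : r = 0%N by lia.
  by rewrite RR0 cf_yy; split => //; lia.
case: r rs => [|r] rs; first by rewrite RR0 cf_yy; split => //; lia.
case: (ltngtP r s) => h; last first.
- by rewrite h RRdiag cf_xx; split => [|/andP [_]]; [case: s {IH rs h} => [|s] | lia].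
- lia.
have [a1 a2] := IH r.+1 h; have [b1 b2] := IH r (ltnW h).
rewrite RR_pascal cfD; split; first by lia.
move=> _; case: (ltngtP r.+1 s) => h2.
- have := a2 ltac:(lia); lia.
- lia.
case: r h2 rs h a1 a2 b1 b2 => [|r] h2 rs h a1 a2 b1 b2.
  by rewrite -h2 RRdiag cf_xx RR0 cf_yy.
have := b2 ltac:(lia); lia.
Qed.

End Part4.
Import Part4.

Module Part5.
Set Implicit Arguments. Unset Strict Implicit. Unset Printing Implicit Defensive.
Import GRing.Theory Num.Theory.
Local Open Scope ring_scope.

Section LI.
Variables n k : nat.
Hypothesis hk : (k <= n)%N.

Definition Ix := option ('I_(n - k) * 'I_k).
Definition pm (i : Ix) : nat := if i is Some p then val p.1 else (n - k)%N.
Definition pL (i : Ix) : nat := if i is Some p then val p.2 else k.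
Definition TT (i : Ix) : {poly {poly int}} :=
  yy ^+ pm i * RR (k - pL i) (n - pL i - pm i) * xx ^+ pL i.

Lemma LI (c : Ix -> int) : \sum_i TT i *~ c i = 0 -> forall i, c i = 0.
Proof.
move=> hsum.
have hcf : forall a b, \sum_i cf (TT i) a b *~ c i = 0.
  move=> a b; rewrite -[RHS](_ : cf 0 a b = 0); last by rewrite /cf !coef0.
  by rewrite -hsum cf_sum; apply: eq_bigr => i _; rewrite cfMz.
have hS : forall N (a : 'I_(n - k)) (b : 'I_k), (a * k + b < N)%N -> c (Some (a, b)) = 0.
  elim=> [|N IH] a b hN; first by [].
  have := hcf b.+1 a.
  rewrite (bigD1 (Some (a, b))) //= big1 ?addr0.
    rewrite /TT /= cf_shift.
    have -> : (b.+1 < b)%N = false by lia.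
    rewrite ltnn subnn subSn // subnn.
    have ha := ltn_ord a; have hb' := ltn_ord b.
    have [_ pos] := @cf10 (n - b - a) (k - b) ltac:(lia).
    have := pos ltac:(lia); move: (cf _ _ _) => beta hb.
    by rewrite mulrzz => /eqP; rewrite mulf_eq0 => /orP [/eqP h|/eqP //]; move: hb; rewrite h.
  move=> [[a' b']|] /= hne; rewrite /TT /= cf_shift; last first.
    have -> : (a < n - k)%N = true by exact: ltn_ord.
    by case: ifP; rewrite mul0rz.
  case: ifP => h1; first by rewrite mul0rz.
  case: ifP => h2; first by rewrite mul0rz.
  case: (ltngtP a' a) => h3.
  - by rewrite IH ?mulr0z //; have := ltn_ord b'; have := ltn_ord b; nia.
  - lia.
  case: (ltngtP b' b) => h4.
  - by rewrite IH ?mulr0z //; nia.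
  - have -> : b' = b.+1 :> nat by lia.
    rewrite subnn h3 subnn cf00 ?mul0rz //; have := ltn_ord a; have := ltn_ord b'; lia.
  - by move: hne; rewrite (val_inj h3) (val_inj h4) eqxx.
have hS' : forall p, c (Some p) = 0.
  by move=> [a b]; apply: (hS (a * k + b).+1).
case=> [p|]; first exact: hS'.
have := hcf k (n - k)%N.
rewrite (bigD1 None) //= big1 ?addr0; last first.
  by move=> [p|] // _; rewrite hS' mulr0z.
rewrite /TT /= cf_shift ltnn subnn ltnn subnn RR0 cf_yy /=.
by rewrite mulrzz mul1r.
Qed.

End LI.

End Part5.
Import Part5.

Module Part6.
Set Implicit Arguments. Unset Strict Implicit. Unset Printing Implicit Defensive.
Import GRing.Theory Num.Theory.

Lemma unif_n0 r m : r <= m -> unif r m != set0.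
Proof.
move=> rm; rewrite -card_gt0 /unif card_draws card_ord bin_gt0 //.
Qed.

Lemma dsum_n0 (T1 T2 : finType) (B1 : {set {set T1}}) (B2 : {set {set T2}}) :
  B1 != set0 -> B2 != set0 -> dsum B1 B2 != set0.
Proof.
move=> /set0Pn [X1 h1] /set0Pn [X2 h2]; apply/set0Pn; exists (jn X1 X2).
by rewrite mem_dsum pl_jn pr_jn h1 h2.
Qed.

Lemma tutte_FM n k m l : form_ok n k m l ->
  tutte (form_matroid n k m l) = (yy ^+ m * RR (k - l) (n - l - m) * xx ^+ l)%R.
Proof.
case/and3P=> h1 h2 h3.
rewrite /form_matroid !tutte_dsum ?dsum_n0 ?unif_n0 // !tutte_unif //.
by rewrite RR0 RRdiag.
Qed.

Lemma card_ge n a : #|[set j : 'I_n | a <= j]| = n - a.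
Proof.
rewrite -sum1_card.
rewrite (eq_bigl (fun j : 'I_n => a <= j)); last by move=> j; rewrite inE.
rewrite big_mkcond /= -(big_mkord xpredT (fun j => if a <= j then 1 else 0)).
elim: n => [|n IH]; first by rewrite big_geq.
rewrite big_nat_recr //= IH; case: leqP => h; lia.
Qed.

Definition Em n k m l : {set {set 'I_n}} :=
  [set S : {set 'I_n} | [&& #|S| == k, [forall j in S, m <= j]
      & [forall j : 'I_n, (n - l <= j) ==> (j \in S)]]].

Lemma Em_n0 n k m l : form_ok n k m l -> k <= n -> Em n k m l != set0.
Proof.
case/and3P=> h1 h2 h3 hk; apply/set0Pn; exists [set j : 'I_n | n - k <= j].
rewrite inE card_ge; apply/and3P; split.
- by apply/eqP; lia.
- by apply/forallP=> j; apply/implyP; rewrite inE; lia.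
- by apply/forallP=> j; apply/implyP; rewrite inE; lia.
Qed.

Lemma Em_matroid n k m l : form_ok n k m l -> k <= n -> is_matroid (Em n k m l).
Proof.
move=> hok hk; apply/andP; split; first exact: Em_n0.
apply/forall_inP=> S1 hS1; apply/forall_inP=> S2 hS2; apply/forall_inP=> x.
rewrite inE => /andP [xS2 xS1].
move: hS1 hS2; rewrite !inE => /and3P [/eqP c1 /forall_inP f1 /forallP g1].
move=> /and3P [/eqP c2 /forall_inP f2 /forallP g2].
have : S2 :\: S1 != set0.
  apply/negP=> /eqP h; move: xS2; suff -> : S2 = S1 by rewrite xS1.
  apply/eqP; rewrite eqEcard c1 c2 leqnn andbT.
  by rewrite -setD_eq0 h.
case/set0Pn=> y; rewrite inE => /andP [yS1 yS2].
apply/exists_inP; exists y; first by rewrite inE yS1 yS2.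
rewrite inE; apply/and3P; split.
- rewrite cardsU1 !inE negb_and negbK yS1 orbT /=.
  have := cardsD1 x S1; rewrite xS1 c1 => h; apply/eqP; by rewrite h.
- apply/forall_inP=> j; rewrite !inE => /orP [/eqP -> | /andP [_ jS1]].
    exact: f2.
  exact: f1.
- apply/forallP=> j; apply/implyP=> hj; rewrite !inE.
  have j1 := implyP (g1 j) hj; have j2 := implyP (g2 j) hj.
  rewrite j1 andbT; apply/orP; right; apply/eqP=> ejx; move: xS2; by rewrite -ejx j2.
Qed.

Section Gm.
Variables n k m l : nat.
Hypothesis H : m + l <= n.

Lemma gm1 (i : 'I_m) : i < n. Proof. have := ltn_ord i; lia. Qed.
Lemma gm2 (j : 'I_(n - l - m)) : m + j < n. Proof. have := ltn_ord j; lia. Qed.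
Lemma gm3 (t : 'I_l) : n - l + t < n. Proof. have := ltn_ord t; lia. Qed.

Definition gm (x : ('I_m + 'I_(n - l - m)) + 'I_l) : 'I_n :=
  match x with
  | inl (inl i) => Ordinal (gm1 i)
  | inl (inr j) => Ordinal (gm2 j)
  | inr t => Ordinal (gm3 t)
  end.

Lemma gm_inj : injective gm.
Proof.
move=> [[i|j]|t] [[i'|j']|t'] /(congr1 val) /= h;
  try (have := ltn_ord i); try (have := ltn_ord j); try (have := ltn_ord t);
  try (have := ltn_ord i'); try (have := ltn_ord j'); try (have := ltn_ord t');
  try (by move=> *; congr (inl (inl _)); apply: val_inj);
  try (by move=> *; congr (inl (inr _)); apply: val_inj);
  try (by move=> *; congr (inr _); apply: val_inj);
  try (move=> *; exfalso; lia).
- by move=> *; congr (inl (inr _)); apply: val_inj; rewrite /= -(addnI h) .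
- by move=> *; congr (inr _); apply: val_inj => /=; lia.
Qed.
End Gm.

Lemma miso_FM_Em n k m l : form_ok n k m l -> miso (form_matroid n k m l) (Em n k m l).
Proof.
case/and3P=> h1 h2 h3.
apply: (@miso_intro _ _ _ _ (gm h2)).
- by rewrite !card_sum !card_ord; lia.
- exact: gm_inj.
move=> X.
have ginj : injective (gm h2) by exact: gm_inj.
have cX : #|gm h2 @: X| = #|pl (pl X)| + #|pr (pl X)| + #|pr X|.
  by rewrite card_imset ?card_split -?card_split //; exact: gm_inj.
have eA : [forall j in gm h2 @: X, m <= j] = (#|pl (pl X)| == 0).
  rewrite cards_eq0; apply/forall_inP/eqP.
    move=> hf; apply/setP=> i; rewrite !inE; apply/negP=> hi.
    have := hf (gm h2 (inl (inl i))) (imset_f _ hi) => /=; have := ltn_ord i; lia.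
  move=> he j /imsetP [x xX ->]; case: x xX => [[i|j']|t] xX /=.
  - have : i \in pl (pl X) by rewrite !inE.
    by rewrite he inE.
  - lia.
  - lia.
have eC : [forall j : 'I_n, (n - l <= j) ==> (j \in gm h2 @: X)] = (#|pr X| == l).
  apply/forallP/idP.
    move=> hf; suff -> : pr X = setT by rewrite cardsT card_ord.
    apply/setP=> t; rewrite !inE.
    have := implyP (hf (gm h2 (inr t))) (leq_addr _ _).
    by rewrite (mem_imset _ _ ginj).
  move=> hc j; apply/implyP=> hj.
  have ht : j - (n - l) < l by have := ltn_ord j; lia.
  have <- : gm h2 (inr (Ordinal ht)) = j by apply: val_inj => /=; lia.
  have : pr X == setT.
    by rewrite eqEcard subsetT /= cardsT card_ord (eqP hc).
  move/eqP/setP/(_ (Ordinal ht)); rewrite !inE => hx.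
  by apply: imset_f.
rewrite /form_matroid mem_dsum mem_dsum !inE cX eA eC.
move: (#|pl (pl X)|) (#|pr (pl X)|) (#|pr X|) => a b c.
by case: (a =P 0) => ha; case: (c =P l) => hc; rewrite ?andbF //= ?ha ?hc; apply/eqP/eqP; lia.
Qed.

Lemma Em_deg n k m l : k <= n -> m <= n - k -> l <= k -> (m = n - k \/ l = k) ->
  forall S, (S \in Em n k m l) = (S == [set j : 'I_n | n - k <= j]).
Proof.
move=> hk hm hl hd S; have cC := card_ge n (n - k).
have e : n - (n - k) = k by lia.
rewrite e in cC.
rewrite inE; apply/and3P/eqP.
  move=> [/eqP c1 /forall_inP f /forallP g]; case: hd => hd.
    apply/eqP; rewrite eqEcard cC c1 leqnn andbT.
    by apply/subsetP=> j /f; rewrite inE hd.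
  apply/esym/eqP; rewrite eqEcard cC c1 leqnn andbT.
  by apply/subsetP=> j; rewrite inE => hj; apply: (implyP (g j)); lia.
move=> ->; split; first by rewrite cC.
  by apply/forall_inP=> j; rewrite inE; lia.
by apply/forallP=> j; apply/implyP; rewrite inE; lia.
Qed.

Lemma Em_norm n k m l : k <= n -> form_ok n k m l -> ~~ ((m < n - k) && (l < k)) ->
  Em n k m l = Em n k (n - k) k.
Proof.
move=> hk /and3P [h1 h2 h3] hn; apply/setP=> S.
rewrite (@Em_deg n k m l) // ?(@Em_deg n k (n - k) k) //; try lia.
Qed.

End Part6.
Import Part6.

Module Part7.
Set Implicit Arguments. Unset Strict Implicit. Unset Printing Implicit Defensive.
Import GRing.Theory.

Section Main.
Variables n k : nat.
Hypothesis hk : k <= n.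

Notation I := (option ('I_(n - k) * 'I_k)).

Definition EE (i : I) : {set {set 'I_n}} := Em n k (@pm n k i) (@pL n k i).

Lemma ok_i (i : I) : form_ok n k (@pm n k i) (@pL n k i).
Proof.
case: i => [[a b]|] /=; apply/and3P; split; try lia;
  have := ltn_ord a; have := ltn_ord b; lia.
Qed.

Lemma EE_in (i : I) : EE i \in form_set n k.
Proof.
rewrite inE Em_matroid ?ok_i //=.
have [hm hl] : @pm n k i < n.+1 /\ @pL n k i < n.+1.
  by case: i => [[a b]|] /=; [have := ltn_ord a; have := ltn_ord b | idtac]; lia.
apply/existsP; exists (inord (@pm n k i)); apply/existsP; exists (inord (@pL n k i)).
by rewrite !inordK // ok_i /=; apply: miso_sym; apply: miso_FM_Em; exact: ok_i.
Qed.

Lemma tutte_EE (i : I) : tutte (EE i) = TT i.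
Proof.
by rewrite -(tutte_miso (miso_FM_Em (ok_i i))) tutte_FM ?ok_i.
Qed.

Lemma form_set_EE B : B \in form_set n k -> exists i : I, miso B (EE i).
Proof.
rewrite inE => /andP [_ /existsP [m /existsP [l /andP [hok hiso]]]].
have h := miso_trans hiso (miso_FM_Em hok).
case hc: ((m < n - k) && (l < k)).
  move/andP: hc => [hm hl].
  by exists (Some (Ordinal hm, Ordinal hl)).
exists None; rewrite /EE /=.
by rewrite -(Em_norm hk hok) ?hc.
Qed.

Definition cls (B : {set {set 'I_n}}) := [set B' in form_set n k | miso B B'].

Lemma cls_eq B B' : miso B B' -> cls B = cls B'.
Proof.
move=> h; apply/setP=> X; rewrite [in LHS]inE [in RHS]inE.
case: (X \in form_set n k) => //=.
apply/idP/idP => h'.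
  exact: miso_trans (miso_sym h) h'.
exact: miso_trans h h'.
Qed.

Lemma cls_miso B B' : B' \in form_set n k -> cls B = cls B' -> miso B B'.
Proof.
move=> hB' e; have : B' \in cls B' by rewrite [in X in is_true X]inE hB' miso_refl.
by rewrite -e [in X in is_true X -> _]inE => /andP [].
Qed.

Definition FF (i : I) := cls (EE i).

Lemma classesE : form_classes n k = FF @: setT.
Proof.
apply/setP=> X; apply/imsetP/imsetP.
  case=> B hB ->; have [i hi] := form_set_EE hB.
  exists i => //; rewrite /FF -(cls_eq hi).
  by [].
by case=> i _ ->; exists (EE i) => //; exact: EE_in.
Qed.

Lemma sum_ind (i : I) (F : I -> {poly {poly int}}) :
  (\sum_(x : I) F x *~ (x == i)%:Z = F i)%R.
Proof.
rewrite (bigD1 i) //= eqxx big1 ?addr0 //.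
by move=> x /negbTE ->; rewrite mulr0z.
Qed.

Lemma TT_inj : injective (@TT n k).
Proof.
move=> i j e; case: (@eqP I i j) => // hne; exfalso.
pose c (x : I) := ((x == i)%:Z - (x == j)%:Z)%R.
have := @LI n k hk c.
have hs : (\sum_(x : I) TT x *~ c x = 0)%R.
  under eq_bigr => x _ do rewrite /c mulrzBr.
  by rewrite sumrB !sum_ind e subrr.
move=> /(_ hs i); rewrite /c eqxx (introF eqP hne).
by [].
Qed.

Lemma FF_inj : injective FF.
Proof.
move=> i j e; apply: TT_inj.
by rewrite -!tutte_EE; apply: tutte_miso; apply: cls_miso e; exact: EE_in.
Qed.

End Main.

End Part7.
Import Part7.

Unset Implicit Arguments.
Local Open Scope ring_scope.
Theorem proposition4p10 (n k : nat) (hk : (k <= n)%N) :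
  #|form_classes n k| = (k * (n - k) + 1)%N /\
  forall (rep : {set {set {set 'I_n}}} -> {set {set 'I_n}})
         (c : {set {set {set 'I_n}}} -> int),
    (forall X, X \in form_classes n k -> rep X \in X) ->
    \sum_(X in form_classes n k) tutte (rep X) *~ c X = 0 ->
    forall X, X \in form_classes n k -> c X = 0.
Proof.
have cE := classesE hk.
have Finj := FF_inj hk.
split.
  rewrite cE card_imset // cardsT card_option card_prod !card_ord; lia.
move=> rep c hrep hsum.
have key : forall i, c (@FF n k i) = 0.
  apply: (@LI n k hk (fun i => c (@FF n k i))).
  rewrite -[RHS]hsum cE big_imset /=; last by move=> x y _ _; apply: Finj.
  apply: eq_big => [x|x _]; first by rewrite inE.
  have hx : @FF n k x \in form_classes n k by rewrite cE imset_f.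
  have := hrep _ hx; rewrite [in X in is_true X -> _]inE => /andP [_ hm].
  by rewrite -(tutte_miso hm) (tutte_EE hk).
move=> X; rewrite cE => /imsetP [i _ ->]; exact: key.
Qed.
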